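(* Let $\mathcal{M}=\langle W,V\rangle$ be a model, $X\subseteq W$ an information state, and $q,p_1,\dots,p_n$ propositional variables. Then $q$ depends on $p_1,\dots,p_n$ in $X$ if and only if, for any $w\in W$, $$\mathcal{M},w,X\vDash \Big(\bigwedge_{1\leq i\leq n}(\Box p_i\vee\Box\neg p_i)\Big)\Rightarrow(\Box q\vee\Box\neg q)$$ according to the Kolodny–MacFarlane semantics.
   Context: Formulas are built by $\varphi::= p\mid \neg\varphi\mid (\varphi\wedge\varphi)\mid \Box\varphi \mid (\varphi\Rightarrow\varphi)$, with $\vee$ defined as usual. A model is $\mathcal{M}=\langle W,V\rangle$ with $W$ nonempty and $V$ assigning each propositional variable a subset of $W$. The Kolodny–MacFarlane semantics evaluates at $\mathcal{M},w,X$ with $w\in W$, $X\subseteq W$: $\mathcal{M},w,X\vDash p$ iff $w\in V(p)$; $\neg,\wedge$ Boolean; $\mathcal{M},w,X\vDash\Box\varphi$ iff $\mathcal{M},v,X\vDash\varphi$ for all $v\in X$; $\mathcal{M},w,X\vDash\varphi\Rightarrow\psi$ iff $\mathcal{M},w,X'\vDash\Box\psi$ for every $X'$ such that (i) $X'\subseteq X$, (ii) $X'\subseteq\llbracket\varphi\rrbracket^{\mathcal{M},X'}$, and (iii) there is no $X''$ satisfying (i) and (ii) with $X'\subsetneq X''$; here $\llbracket\varphi\rrbracket^{\mathcal{M},Y}=\{v\in Y\mid\mathcal{M},v,Y\vDash\varphi\}$. In an information state $X$, $q$ depends on $p_1,\dots,p_n$ iff any two worlds in $X$ that agree on the truth values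 of $p_1,\dots,p_n$ also agree on the truth value of $q$. *)

(* Defs.v *)
From Stdlib Require Import List.
Import ListNotations.

Inductive form : Type :=
| Var : nat -> form
| Neg : form -> form
| And : form -> form -> form
| Box : form -> form
| Imp : form -> form -> form.

Definition Or (a b : form) : form := Neg (And (Neg a) (Neg b)).

Record model : Type := Model {
  world : Type;
  val : nat -> world -> Prop;
  world_nonempty : inhabited world
}.

Definition state (M : model) := world M -> Prop.

Definition subset {T : Type} (A B : T -> Prop) : Prop := forall x, A x -> B x.
Definition psubset {T : Type} (A B : T -> Prop) : Prop :=
  subset A B /\ ~ subset B A.

Fixpoint sat (M : model) (phi : form) (w : world M) (X : state M) {struct phi} : Prop :=
  match phi with
  | Var p => val M p w
  | Neg a => ~ sat M a w X
  | And a b => sat M a w X /\ sat M b w X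
  | Box a => forall v, X v -> sat M a v X
  | Imp a b =>
      let ok := fun Y : state M =>
                  subset Y X /\ (forall v, Y v -> sat M a v Y) in
      forall X' : state M,
        ok X' ->
        (~ exists X'' : state M, ok X'' /\ psubset X' X'') ->
        (* M, w, X' |= Box b *)
        forall v, X' v -> sat M b v X'
  end.

Definition ext (M : model) (phi : form) (Y : state M) : state M :=
  fun v => Y v /\ sat M phi v Y.

Definition Top : form := Neg (And (Var 0) (Neg (Var 0))).
Fixpoint bigand (l : list form) : form :=
  match l with
  | [] => Top
  | [a] => a
  | a :: l' => And a (bigand l')
  end.

Definition depends (M : model) (X : state M) (q : nat) (ps : list nat) : Prop :=
  forall w1 w2, X w1 -> X w2 ->
    (forall p, In p ps -> (val M p w1 <-> val M p w2)) ->
    (val M q w1 <-> val M q w2).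

Definition decided (p : nat) : form := Or (Box (Var p)) (Box (Neg (Var p))).

(* Main.v *)
Require Import Defs.
From Stdlib Require Import List Classical.
Import ListNotations.

Lemma sat_decided (M : model) p v (Y : state M) :
  sat M (decided p) v Y <->
  (forall x, Y x -> val M p x) \/ (forall x, Y x -> ~ val M p x).
Proof.
  simpl. split.
  - intros H. apply NNPP. intros H'. apply H. split; intros H2; apply H'; auto.
  - intros [H|H] [H1 H2]; auto.
Qed.

Lemma bigand_intro (M : model) v (Y : state M) (l : list form) :
  (forall a, In a l -> sat M a v Y) -> sat M (bigand l) v Y.
Proof.
  induction l as [|a l IH]; intros H.
  - simpl. tauto.
  - destruct l as [|b l'].
    + apply H; simpl; auto.
    + change (sat M a v Y /\ sat M (bigand (b :: l')) v Y). split.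
      * apply H; simpl; auto.
      * apply IH. intros c Hc; apply H; simpl in *; auto.
Qed.

Lemma bigand_elim (M : model) v (Y : state M) (l : list form) :
  sat M (bigand l) v Y -> forall a, In a l -> sat M a v Y.
Proof.
  induction l as [|a l IH]; intros H c Hc.
  - destruct Hc.
  - destruct l as [|b l'].
    + destruct Hc as [<-|[]]; auto.
    + destruct H as [H1 H2]. destruct Hc as [<-|Hc]; auto.
Qed.

Theorem proposition11 (M : model) (X : state M) (q : nat) (ps : list nat) :
  depends M X q ps <->
  (forall w : world M,
     sat M (Imp (bigand (map decided ps)) (decided q)) w X).
Proof.
  split.
  - intros Hdep w X' [Hsub Hok] _ v Hv. apply sat_decided.
    apply NNPP. intros Hn. apply not_or_and in Hn. destruct Hn as [H1 H2].
    apply not_all_ex_not in H1. destruct H1 as [a Ha].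
    apply not_all_ex_not in H2. destruct H2 as [b Hb].
    apply imply_to_and in Ha. apply imply_to_and in Hb.
    destruct Ha as [Ya Na]. destruct Hb as [Yb Nb].
    apply NNPP in Nb.
    apply Na. apply (Hdep a b (Hsub a Ya) (Hsub b Yb)); auto.
    intros p Hp.
    pose proof (bigand_elim _ _ _ _ (Hok a Ya) (decided p) (in_map _ _ _ Hp)) as Hd.
    apply sat_decided in Hd. destruct Hd as [Hd|Hd].
    + split; intros; apply Hd; auto.
    + split; intros Hx; exfalso; [apply (Hd a)|apply (Hd b)]; auto.
  - intros H w1 w2 X1 X2 Hagree.
    set (Y := fun x => X x /\ forall p, In p ps -> (val M p x <-> val M p w1)).
    assert (Hdec : forall x : world M, Y x ->
       sat M (bigand (map decided ps)) x Y).
    { intros x _. apply bigand_intro. intros a Ha.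
      apply in_map_iff in Ha. destruct Ha as [p [<- Hp]].
      apply sat_decided. destruct (classic (val M p w1)) as [Hw|Hw].
      - left. intros y [_ Hy]. apply (Hy p Hp); auto.
      - right. intros y [_ Hy] Hy'. apply Hw, (Hy p Hp); auto. }
    assert (Y1 : Y w1) by (split; [auto | intros; tauto]).
    assert (Y2 : Y w2).
    { split; [auto| intros p Hp; specialize (Hagree p Hp); tauto]. }
    pose proof (H w1 Y) as HY. simpl in HY.
    specialize (HY (conj (fun x (Hx : Y x) => proj1 Hx) Hdec)).
    assert (Hmax : ~ (exists X'' : state M,
      (subset X'' X /\ (forall v, X'' v -> sat M (bigand (map decided ps)) v X''))
      /\ psubset Y X'')).
    { intros [Z [[HZX HZ] [HYZ HnZY]]]. apply HnZY. intros x Zx.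
      split; [auto|]. intros p Hp.
      pose proof (bigand_elim _ _ _ _ (HZ w1 (HYZ w1 Y1)) (decided p) (in_map _ _ _ Hp)) as Hd.
      apply sat_decided in Hd. destruct Hd as [Hd|Hd].
      - split; intros; apply Hd; auto.
      - split; intros Hx; exfalso; [apply (Hd x)|apply (Hd w1)]; auto. }
    specialize (HY Hmax w1 Y1).
    apply (sat_decided M q w1 Y) in HY.
    destruct HY as [Hq|Hq].
    + split; intros; apply Hq; auto.
    + split; intros Hx; exfalso; [apply (Hq w1)|apply (Hq w2)]; auto.
Qed.
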